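(* (1) For $1\le k\le m-1$, the map $\psi_k:A_k\to(A_0)^{p^k}$, $f\mapsto\big(f(\chi_1\xi_m,\dots,\chi_k\xi_m)\big)_{(\chi_1,\dots,\chi_k)\in\mu_p^k}$, is homogeneous and injective. (2) The image of $M_m=\xi_m^p-\big(\sum_{j=1}^m z_j\xi_j\big)^p$ in $A_{m-1}$ is a non-zero divisor; i.e. multiplication by $M_m$ is an injective homogeneous $A$-linear map $A_{m-1}\to A_{m-1}$ of degree $p$. Consequently $M_1,\dots,M_m$ form a regular sequence in $A[\xi_1,\dots,\xi_m]$.
   Context: $\mu_p=\{\zeta_p^j\mid 0\le j\le p-1\}$, $\zeta_p=e^{2\pi\sqrt{-1}/p}$. $A=\mathbb C[z_1^{\pm1},\dots,z_m^{\pm1},1/R(z)]$ with $R(z)=\prod_{(i_1,\dots,i_m)\in\{1,\dots,p\}^m}(1-\zeta_p^{i_1}z_1-\cdots-\zeta_p^{i_m}z_m)$. $M_k=\xi_k^p-\xi_m^p$ for $1\le k\le m-1$; $A_0=A[\xi_m]$, $A_k=A[\xi_m,\xi_1,\dots,\xi_k]/(M_1,\dots,M_k)$, graded by total degree in the $\xi$'s. *)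

(* Defs.v *)
From HB Require Import structures.
From mathcomp Require Import all_boot all_order all_algebra.
From mathcomp Require Import complex Rstruct mpoly fraction.
From Stdlib Require Import Rdefinitions Rtrigo_def Rtrigo1.

Set Implicit Arguments.
Unset Strict Implicit.
Unset Printing Implicit Defensive.

Import Order.TTheory GRing.Theory Num.Theory.
Local Open Scope ring_scope.
Local Notation "x %:F" := (@FracField.tofrac _ x).

Definition CC : numClosedFieldType := complex Rdefinitions.R.

Definition zeta (p : nat) : CC :=
  (cos (2 * PI / p%:R) +i* sin (2 * PI / p%:R))%C.

Definition mu (p : nat) : pred CC := [pred c | [exists j : 'I_p, c == zeta p ^+ j]].

Section Rings.
Variables (p n : nat).
(* m = n.+1 ; the variables z_1..z_m and xi_1..xi_m are indexed by 'I_m,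
   z_j / xi_j corresponding to the ordinal j-1; xi_m is ord_max. *)
Local Notation m := n.+1.

Definition PZ := {mpoly CC[m]}.
Definition KZ := {fraction PZ}.

Definition cK (c : CC) : KZ := (c%:MP : PZ)%:F.
Definition zK (j : 'I_m) : KZ := ('X_j : PZ)%:F.

Definition Rpoly : PZ :=
  \prod_(t : {ffun 'I_m -> 'I_p}) (1 - \sum_(j < m) (zeta p ^+ (t j).+1) *: 'X_j).

(* A = C[z^{+-1}, 1/R(z)] as a subring of C(z) *)
Definition inA (x : KZ) : Prop :=
  exists (f : PZ) (a : 'X_{1..m}) (e : nat),
    x = f%:F / (('X_[a] * Rpoly ^+ e : PZ)%:F).

Definition PX := {mpoly KZ[m]}.

(* f lies in A[xi_i | i in V] *)
Definition inAX (V : pred 'I_m) (f : PX) : Prop :=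
  (forall a, inA f@_a) /\
  (forall a, a \in msupp f -> forall i, i \notin V -> a i = 0%N).

(* variables of A_k : xi_m, xi_1, ..., xi_k *)
Definition Vk (k : nat) : pred 'I_m := [pred i : 'I_m | (val i < k)%nat || (i == ord_max)].

(* M_k = xi_k^p - xi_m^p (1 <= k <= m-1),
   M_m = xi_m^p - (sum_j z_j xi_j)^p  ; generator M_{i+1} is  Mgen i *)
Definition Mm : PX := 'X_ord_max ^+ p - (\sum_(j < m) zK j *: 'X_j) ^+ p.
Definition Mgen (i : 'I_m) : PX :=
  if i == ord_max then Mm else 'X_i ^+ p - 'X_ord_max ^+ p.

Definition inI (V : pred 'I_m) (k : nat) (f : PX) : Prop :=
  exists g : 'I_m -> PX,
    (forall i, inAX V (g i)) /\ f = \sum_(i < m | (i < k)%nat) g i * Mgen i.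

(* the substitution xi_i |-> chi_i xi_m (i <= k), chi = (chi_1..chi_k) *)
Definition psi_subst (k : nat) (chi : 'I_k -> CC) : m.-tuple PX :=
  [tuple match (insub (val i) : option 'I_k) with
         | Some j => cK (chi j) *: 'X_ord_max
         | None => 'X_i
         end | i < m].

(* the chi-component of psi_k(f) *)
Definition psi (k : nat) (chi : 'I_k -> CC) (f : PX) : PX :=
  f \mPo psi_subst chi.

End Rings.

Arguments Vk : clear implicits.

(* Main.v *)
Require Import Defs.
From Stdlib Require Import Reals Lra.
From HB Require Import structures.
From mathcomp Require Import all_boot all_order all_algebra.
From mathcomp Require Import complex Rstruct mpoly fraction.
Set Implicit Arguments. Unset Strict Implicit.
Import Order.TTheory GRing.Theory Num.Theory.
Local Open Scope ring_scope.
Local Notation "x %:F" := (@FracField.tofrac _ x).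

Section Trig.
Local Open Scope R_scope.
Definition ang (p e : nat) : Rdefinitions.R := INR e * (2 * PI / INR p).

Lemma zetaX p e : (zeta p ^+ e = (cos (ang p e) +i* sin (ang p e))%C)%R.
Proof.
elim: e => [|e IH].
  by rewrite expr0 /ang /= Rmult_0_l cos_0 sin_0.
rewrite exprSr IH /zeta -INRE.
have -> : ang p e.+1 = ang p e + 2 * PI / INR p by rewrite /ang S_INR; ring.
rewrite cos_plus sin_plus /=.
congr (Complex _ _); exact: addrC.
Qed.

Lemma zeta_eq1 p e : (0 < p)%N -> (zeta p ^+ e == 1)%R = (p %| e)%N.
Proof.
move=> p0.
have Hp : INR p <> 0 by apply: not_0_INR; case: p p0.
have per q : (zeta p ^+ (q * p) = 1)%R.
  rewrite zetaX.
  have -> : ang p (q * p) = 0 + 2 * INR q * PI.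
    by rewrite /ang mult_INR; field.
  by rewrite cos_period sin_period cos_0 sin_0.
rewrite (divn_eq e p) exprD per mul1r dvdn_addr ?dvdn_mull //.
have := ltn_pmod e p0; set r := (e %% p)%N => rp.
case: (posnP r) => [->|r0]; first by rewrite expr0 eqxx dvdn0.
rewrite (gtnNdvd r0 rp) zetaX.
apply/negbTE/eqP => [[]] /=.
set x := INR r * PI / INR p.
have -> : ang p r = 2 * x by rewrite /ang /x; field.
rewrite cos_2a_sin.
have hr : 0 < INR r by apply: lt_0_INR; apply/ssrnat.ltP.
have hrp : INR r < INR p by apply: lt_INR; apply/ssrnat.ltP.
have hx : x * INR p = INR r * PI by rewrite /x; field.
have hpi := PI_RGT_0.
have : 0 < sin x.
  have hp0 : 0 < INR p by lra.
  apply: sin_gt_0.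
  - by rewrite /x; apply: Rdiv_lt_0_compat => //; apply: Rmult_lt_0_compat.
  - apply: (Rmult_lt_reg_r (INR p)) => //; rewrite hx; nra.
move=> h h1 _; change (GRing.one _) with 1 in h1; nra.
Qed.
End Trig.

Section A.
Variables (p n : nat).
Local Notation m := n.+1.
Local Notation PZn := (PZ n).
Local Notation K := (KZ n).

Definition Den (a : 'X_{1..m}) (e : nat) : PZn := 'X_[a] * Rpoly p n ^+ e.

Lemma Rpoly_neq0 : Rpoly p n != 0.
Proof.
apply/eqP => h.
have := congr1 (meval (fun _ => (0 : CC))) h.
rewrite meval0 /Rpoly rmorph_prod.
rewrite big1 ?meval0 => [/eqP|t _]; first by rewrite oner_eq0.
rewrite rmorphB rmorph1 rmorph_sum big1 ?subr0 // => j _ /=.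
by rewrite mevalZ mevalXU mulr0.
Qed.

Lemma Den_neq0 a e : (Den a e)%:F != 0.
Proof.
rewrite tofrac_eq0 /Den mulf_neq0 ?expf_neq0 ?Rpoly_neq0 //.
by rewrite -msupp_eq0 msuppX.
Qed.

Lemma DenM a e a' e' : Den (a + a') (e + e') = Den a e * Den a' e'.
Proof. by rewrite /Den mpolyXD exprD mulrACA. Qed.

Lemma inA_cst (x : PZn) : inA p x%:F.
Proof. by exists x, 0%MM, 0%N; rewrite /Den mpolyX0 expr0 mulr1 tofrac1 divr1. Qed.

Lemma inAE (x : K) : inA p x <-> exists f a e, x = f%:F / (Den a e)%:F.
Proof. by []. Qed.

Lemma inAD (x y : K) : inA p x -> inA p y -> inA p (x + y).
Proof.
move=> [f [a [e ->]]] [g [b [d ->]]].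
apply/inAE; exists (f * Den b d + g * Den a e), (a + b)%MM, (e + d)%N.
have := Den_neq0 a e; have := Den_neq0 b d.
rewrite DenM => h2 h1.
by rewrite (addf_div _ _ h1 h2) tofracD !tofracM.
Qed.

Lemma inAN (x : K) : inA p x -> inA p (- x).
Proof. by move=> [f [a [e ->]]]; exists (- f), a, e; rewrite tofracN mulNr. Qed.

Lemma inAM (x y : K) : inA p x -> inA p y -> inA p (x * y).
Proof.
move=> [f [a [e ->]]] [g [b [d ->]]].
apply/inAE; exists (f * g), (a + b)%MM, (e + d)%N.
have := Den_neq0 a e; have := Den_neq0 b d.
rewrite DenM => h2 h1.
by rewrite mulf_div !tofracM.
Qed.

Lemma inA0 : inA p (0 : K). Proof. by rewrite -tofrac0; apply: inA_cst. Qed.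
Lemma inA1 : inA p (1 : K). Proof. by rewrite -tofrac1; apply: inA_cst. Qed.
Lemma inAB (x y : K) : inA p x -> inA p y -> inA p (x - y).
Proof. by move=> hx hy; apply: inAD => //; apply: inAN. Qed.
Lemma inA_sum (I : Type) (r : seq I) (P : pred I) (F : I -> K) :
  (forall i, P i -> inA p (F i)) -> inA p (\sum_(i <- r | P i) F i).
Proof. by move=> h; apply: (big_ind (@inA p n)) => //; [apply: inA0|apply: inAD]. Qed.
Lemma inA_prod (I : Type) (r : seq I) (P : pred I) (F : I -> K) :
  (forall i, P i -> inA p (F i)) -> inA p (\prod_(i <- r | P i) F i).
Proof. by move=> h; apply: (big_ind (@inA p n)) => //; [apply: inA1|apply: inAM]. Qed.
Lemma inA_exp (x : K) k : inA p x -> inA p (x ^+ k).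
Proof. by move=> h; elim: k => [|k IH]; [rewrite expr0; apply: inA1| rewrite exprS; apply: inAM]. Qed.
Lemma inA_cK c : inA p (cK n c). Proof. exact: inA_cst. Qed.
Lemma inA_zK (j : 'I_m) : inA p (zK j). Proof. exact: inA_cst. Qed.

Local Notation PXn := (PX n).
Implicit Types (V : pred 'I_m) (f g : PXn).

Definition suppV V f := forall a, a \in msupp f -> forall i, i \notin V -> a i = 0%N.

Lemma SVE V f : inAX p V f <-> (forall a, inA p f@_a) /\ suppV V f.
Proof. by []. Qed.

Lemma SV_coef V f a : inAX p V f -> inA p f@_a.
Proof. by case=> h _; apply: h. Qed.

Lemma SV_supp V f a i : inAX p V f -> a \in msupp f -> i \notin V -> a i = 0%N.
Proof. by move=> [_ h] ha hi; exact: h a ha i hi. Qed.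

Lemma SV0 V : inAX p V (0 : PXn).
Proof. by split=> [a|a]; rewrite ?mcoeff0 ?msupp0 //; apply: inA0. Qed.

Lemma SVD V f g : inAX p V f -> inAX p V g -> inAX p V (f + g).
Proof.
move=> hf hg; split=> [a|a /msuppD_le].
  by rewrite mcoeffD; apply: inAD; [apply: SV_coef hf|apply: SV_coef hg].
by rewrite mem_cat => /orP[] ha i hi; [apply: SV_supp hf ha hi|apply: SV_supp hg ha hi].
Qed.

Lemma SVN V f : inAX p V f -> inAX p V (- f).
Proof.
move=> hf; split=> [a|a].
  by rewrite mcoeffN; apply: inAN; apply: SV_coef hf.
by rewrite (perm_mem (msuppN f)) => ha i hi; apply: (SV_supp hf ha hi).
Qed.

Lemma SVB V f g : inAX p V f -> inAX p V g -> inAX p V (f - g).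
Proof. by move=> hf hg; apply: SVD => //; apply: SVN. Qed.

Lemma SVZ V (c : KZ n) f : inA p c -> inAX p V f -> inAX p V (c *: f).
Proof.
move=> hc hf; split=> [a|a /msuppZ_le].
  by rewrite mcoeffZ; apply: inAM => //; apply: SV_coef hf.
by move=> ha i hi; apply: (SV_supp hf ha hi).
Qed.

Lemma SVM V f g : inAX p V f -> inAX p V g -> inAX p V (f * g).
Proof.
move=> hf hg; split=> [a|a /msuppM_le /allpairsP [[a1 a2] /= [h1 h2 ->]] i hi].
  rewrite mcoeffM; apply: inA_sum => k _.
  by apply: inAM; [apply: SV_coef hf|apply: SV_coef hg].
by rewrite mnmDE (SV_supp hf h1 hi) (SV_supp hg h2 hi).
Qed.

Lemma SVmon V (c : KZ n) (a : 'X_{1..m}) :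
  inA p c -> (forall i, i \notin V -> a i = 0%N) -> inAX p V (c *: 'X_[a]).
Proof.
move=> hc ha; split=> [b|b /msuppZ_le].
  rewrite mcoeffZ mcoeffX; apply: inAM => //.
  by case: (a == b); [apply: inA1|apply: inA0].
by rewrite msuppX inE => /eqP ->.
Qed.

Lemma SV1 V : inAX p V (1 : PXn).
Proof.
have -> : (1 : PXn) = 1 *: 'X_[0%MM] by rewrite scale1r mpolyX0.
by apply: SVmon; [apply: inA1|move=> i _; rewrite mnm0E].
Qed.

Lemma SVC V (c : KZ n) : inA p c -> inAX p V c%:MP.
Proof.
move=> hc; have -> : (c%:MP : PXn) = c *: 'X_[0%MM] by rewrite mpolyX0 -mul_mpolyC mulr1.
by apply: SVmon => // i _; rewrite mnm0E.
Qed.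

Lemma SVX V i : i \in V -> inAX p V ('X_i : PXn).
Proof.
move=> hi; have -> : ('X_i : PXn) = 1 *: 'X_[U_(i)] by rewrite scale1r.
apply: SVmon; first exact: inA1.
by move=> j hj; rewrite mnm1E; case: eqP => // e; move: hj; rewrite -e hi.
Qed.

Lemma SV_sum V (I : Type) (r : seq I) (P : pred I) (F : I -> PXn) :
  (forall i, P i -> inAX p V (F i)) -> inAX p V (\sum_(i <- r | P i) F i).
Proof. by move=> h; apply: (big_ind (inAX p V)) => //; [apply: SV0|apply: SVD]. Qed.

Lemma SV_prod V (I : Type) (r : seq I) (P : pred I) (F : I -> PXn) :
  (forall i, P i -> inAX p V (F i)) -> inAX p V (\prod_(i <- r | P i) F i).
Proof. by move=> h; apply: (big_ind (inAX p V)) => //; [apply: SV1|apply: SVM]. Qed.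

Lemma SV_exp V f k : inAX p V f -> inAX p V (f ^+ k).
Proof. by move=> h; elim: k => [|k IH]; [rewrite expr0; apply: SV1| rewrite exprS; apply: SVM]. Qed.

Lemma SV_sub V V' f : {subset V <= V'} -> inAX p V f -> inAX p V' f.
Proof.
move=> s [h1 h2]; split=> // a ha i hi; apply: h2 => //.
by apply: contra hi; apply: s.
Qed.

End A.

Section P.
Variables (n k : nat).
Hypothesis hk : (k <= n)%N.
Local Notation m := n.+1.
Local Notation PXn := (PX n).

Lemma cKD x y : cK n (x + y) = cK n x + cK n y.
Proof. by rewrite /cK raddfD tofracD. Qed.
Lemma cKM x y : cK n (x * y) = cK n x * cK n y.
Proof. by rewrite /cK rmorphM tofracM. Qed.
Lemma cK1 : cK n 1 = 1.
Proof. by rewrite /cK mpolyC1 tofrac1. Qed.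
Lemma cK0 : cK n 0 = 0.
Proof. by rewrite /cK mpolyC0 tofrac0. Qed.
Lemma cKX x e : cK n (x ^+ e) = cK n x ^+ e.
Proof. by rewrite /cK rmorphXn tofracXn. Qed.
Lemma cK_sum (I : Type) (r : seq I) (P : pred I) (F : I -> CC) :
  cK n (\sum_(i <- r | P i) F i) = \sum_(i <- r | P i) cK n (F i).
Proof. exact: (big_morph _ cKD cK0). Qed.
Lemma cK_prod (I : Type) (r : seq I) (P : pred I) (F : I -> CC) :
  cK n (\prod_(i <- r | P i) F i) = \prod_(i <- r | P i) cK n (F i).
Proof. exact: (big_morph _ cKM cK1). Qed.
Lemma cK_eq0 x : (cK n x == 0) = (x == 0).
Proof. by rewrite /cK tofrac_eq0 mpolyC_eq0. Qed.

Definition sg (i : 'I_m) : 'I_m := if (val i < k)%N then ord_max else i.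
Definition cfc (chi : 'I_k -> CC) (i : 'I_m) : CC :=
  if insub (val i) is Some j then chi j else 1.
Definition col (a : 'X_{1..m}) : 'X_{1..m} := (\sum_(i < m) U_(sg i) *+ a i)%MM.
Definition wc chi (a : 'X_{1..m}) : CC := \prod_(i < m) cfc chi i ^+ a i.

Lemma tnth_psi chi i : tnth (psi_subst n chi) i = cK n (cfc chi i) *: 'X_(sg i).
Proof.
rewrite tnth_mktuple /cfc /sg; case: insubP => [j hi vj|hi].
  by rewrite hi.
by rewrite (negbTE hi) cK1 scale1r.
Qed.

Lemma psiE chi f :
  psi chi f = \sum_(a <- msupp f) (f@_a * cK n (wc chi a)) *: 'X_[col a].
Proof.
rewrite /psi comp_mpolyE; apply: eq_bigr => a _.
under eq_bigr do rewrite tnth_psi exprZn.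
rewrite scaler_prod scalerA /wc cK_prod; congr (_ *: _); first congr (_ * _).
  by apply: eq_bigr => i _; rewrite cKX.
rewrite /col (big_morph (fun a => ('X_[a] : PXn)) (fun a b => @mpolyXD _ _ a b) (@mpolyX0 _ _)); apply: eq_bigr => i _.
by rewrite mpolyXn.
Qed.

Lemma psi_coef chi f b :
  (psi chi f)@_b = \sum_(a <- msupp f | col a == b) f@_a * cK n (wc chi a).
Proof.
rewrite psiE raddf_sum [RHS]big_mkcond; apply: eq_bigr => a _ /=.
rewrite mcoeffZ mcoeffX; case: eqP => _; first by rewrite mulr1.
by rewrite mulr0.
Qed.

Lemma colE a i : col a i = (\sum_(j < m | sg j == i) a j)%N.
Proof.
rewrite /col mnm_sumE [RHS]big_mkcond /=; apply: eq_bigr => j _.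
by rewrite mulmnE mnm1E; case: eqP => _; rewrite ?mul1n ?mul0n.
Qed.

Lemma max_nlt : ~~ (val (@ord_max n) < k)%N.
Proof. by rewrite /= -leqNgt. Qed.

Lemma col_lt a i : (val i < k)%N -> col a i = 0%N.
Proof.
move=> hi; rewrite colE big_pred0 // => j; rewrite /sg.
case: ifP => hj; apply/eqP => e.
  by move: hi; rewrite -e (negbTE max_nlt).
by move: hi; rewrite -e hj.
Qed.

Lemma col_other a i : i != ord_max -> ~~ (val i < k)%N -> col a i = a i.
Proof.
move=> hm hi; rewrite colE (big_pred1 i) // => j /=; rewrite /sg.
case: ifP => hj //.
rewrite eq_sym (negbTE hm); apply/esym/eqP => e; move: hj; by rewrite e (negbTE hi).
Qed.

Lemma col_max a : col a ord_max = (a ord_max + \sum_(j < m | (val j < k)%N) a j)%N.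
Proof.
rewrite colE (bigD1 ord_max) /=; last by rewrite /sg (negbTE max_nlt).
congr (_ + _)%N; apply: eq_bigl => j; rewrite /sg.
case: ifP => hj; rewrite ?eqxx ?andbT.
  by apply/eqP => e; move: hj; rewrite e (negbTE max_nlt).
by rewrite andbN.
Qed.

Lemma mdeg_col a : mdeg (col a) = mdeg a.
Proof.
rewrite /col mdeg_sum mdegE; apply: eq_bigr => i _.
by rewrite mdegMn mdeg1 mul1n.
Qed.

End P.

Section I.
Variables (p n : nat).
Hypothesis p_gt0 : (0 < p)%N.
Local Notation m := n.+1.
Local Notation PXn := (PX n).
Implicit Types (V : pred 'I_m) (f g h : PXn).

Lemma mu_exp c : c \in mu p -> c ^+ p = 1.
Proof.
move=> /existsP [j /eqP ->]; rewrite -exprM; apply/eqP.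
by rewrite zeta_eq1 // dvdn_mull.
Qed.

Lemma orth e : \sum_(l < p) zeta p ^+ (l * e) = if (p %| e)%N then p%:R else 0.
Proof.
case: ifP => he.
  rewrite (eq_bigr (fun _ => 1)) ?sumr_const ?card_ord // => l _.
  by rewrite mulnC exprM; move: he; rewrite -zeta_eq1 // => /eqP ->; rewrite expr1n.
under eq_bigr do rewrite mulnC exprM.
set y := zeta p ^+ e.
have hy : y - 1 != 0 by rewrite subr_eq0 /y zeta_eq1 // he.
have : (y - 1) * \sum_(i < p) y ^+ i = 0.
  by rewrite -subrX1 -exprM mulnC exprM (_ : zeta p ^+ p = 1) ?expr1n ?subrr //; apply/eqP; rewrite zeta_eq1.
by move/eqP; rewrite mulf_eq0 (negbTE hy) /= => /eqP.
Qed.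

Lemma I0 V k : inI p V k (0 : PXn).
Proof.
exists (fun _ => 0); split=> [i|]; first exact: SV0.
by rewrite big1 // => i _; rewrite mul0r.
Qed.

Lemma ID V k f g : inI p V k f -> inI p V k g -> inI p V k (f + g).
Proof.
move=> [g1 [h1 ->]] [g2 [h2 ->]]; exists (fun i => g1 i + g2 i); split.
  by move=> i; apply: SVD.
by rewrite -big_split; apply: eq_bigr => i _; rewrite mulrDl.
Qed.

Lemma IM V k h f : inAX p V h -> inI p V k f -> inI p V k (h * f).
Proof.
move=> hh [g [hg ->]]; exists (fun i => h * g i); split.
  by move=> i; apply: SVM.
by rewrite mulr_sumr; apply: eq_bigr => i _; rewrite mulrA.
Qed.

Lemma IN V k f : inI p V k f -> inI p V k (- f).
Proof.
move=> hf; rewrite -mulN1r; apply: IM => //; apply: SVN; apply: SV1.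
Qed.

Lemma IB V k f g : inI p V k f -> inI p V k g -> inI p V k (f - g).
Proof. by move=> hf hg; apply: ID => //; apply: IN. Qed.

Lemma Igen V k h (i : 'I_m) : (i < k)%N -> inAX p V h -> inI p V k (h * Mgen p i).
Proof.
move=> hi hh; exists (fun j => if j == i then h else 0); split.
  by move=> j; case: eqP => _ //; apply: SV0.
rewrite (bigD1 i) //= eqxx big1 ?addr0 // => j /andP [_ /negbTE ->].
by rewrite mul0r.
Qed.

End I.

Section K.
Variables (p n k : nat).
Hypothesis p_gt0 : (0 < p)%N.
Hypothesis hk : (k <= n)%N.
Local Notation m := n.+1.
Local Notation PXn := (PX n).
Implicit Types (V : pred 'I_m) (f g h : PXn).

Lemma psiM (chi : 'I_k -> CC) f g : psi chi (f * g) = psi chi f * psi chi g.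
Proof. by rewrite /psi rmorphM. Qed.
Lemma psiD (chi : 'I_k -> CC) f g : psi chi (f + g) = psi chi f + psi chi g.
Proof. by rewrite /psi raddfD. Qed.
Lemma psiB (chi : 'I_k -> CC) f g : psi chi (f - g) = psi chi f - psi chi g.
Proof. by rewrite /psi raddfB. Qed.
Lemma psiX (chi : 'I_k -> CC) i : psi chi 'X_i = cK n (cfc chi i) *: 'X_(sg k i).
Proof. by rewrite /psi comp_mpolyXU -tnth_nth tnth_psi. Qed.

Lemma lt_neq_max (i : 'I_m) : (i < k)%N -> i != ord_max.
Proof. by move=> hi; apply/eqP => e; move: hi; rewrite e /= ltnNge hk. Qed.

Lemma Mgen_lt (i : 'I_m) : (i < k)%N -> Mgen p i = 'X_i ^+ p - 'X_ord_max ^+ p.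
Proof. by move=> hi; rewrite /Mgen (negbTE (lt_neq_max hi)). Qed.

Lemma cfc_max (chi : 'I_k -> CC) : cfc chi (@ord_max n) = 1.
Proof. by rewrite /cfc; case: insubP => // j hj; move: hj; rewrite /= ltnNge hk. Qed.

Lemma sg_max : sg k (@ord_max n) = ord_max.
Proof. by rewrite /sg; case: ifP. Qed.

Lemma psi_Mgen (chi : 'I_k -> CC) (i : 'I_m) : (forall j, chi j \in mu p) ->
  (i < k)%N -> psi chi (Mgen p i) = 0.
Proof.
move=> hchi hi; rewrite Mgen_lt // psiB /psi !rmorphXn /= -!/(psi chi _) !psiX.
rewrite cfc_max sg_max cK1 scale1r /sg hi !exprZn.
rewrite /cfc; case: insubP => [j _ _|]; last by rewrite hi.
by rewrite -cKX mu_exp // cK1 scale1r subrr.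
Qed.

Lemma psi_I V (chi : 'I_k -> CC) f : (forall j, chi j \in mu p) ->
  inI p V k f -> psi chi f = 0.
Proof.
move=> hchi [g [_ ->]]; rewrite /psi raddf_sum /= big1 // => i hi.
by rewrite -/(psi chi _) psiM psi_Mgen // mulr0.
Qed.


Variable V : pred 'I_m.
Hypothesis hV : forall i : 'I_m, (i < k)%N -> i \in V.
Hypothesis hVm : ord_max \in V.

Definition red f := forall a, a \in msupp f -> forall i : 'I_m, (i < k)%N -> (a i < p)%N.
Definition msr (a : 'X_{1..m}) := (\sum_(i < m | (i < k)%N) a i)%N.

Lemma red0 : red 0.
Proof. by move=> a; rewrite msupp0. Qed.

Lemma redD f g : red f -> red g -> red (f + g).
Proof.
move=> hf hg a /msuppD_le; rewrite mem_cat => /orP [] ha i hi.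
  exact: hf.
exact: hg.
Qed.

Lemma red_mon (c : KZ n) (a : 'X_{1..m}) :
  (forall i : 'I_m, (i < k)%N -> (a i < p)%N) -> red (c *: 'X_[a]).
Proof. by move=> ha b /msuppZ_le; rewrite msuppX inE => /eqP ->. Qed.

Lemma reduce_mon N : forall (a : 'X_{1..m}) (c : KZ n), (msr a < N)%N -> inA p c ->
  (forall i, i \notin V -> a i = 0%N) ->
  exists r, [/\ inAX p V r, red r & inI p V k (c *: 'X_[a] - r)].
Proof.
elim: N => [//|N IH] a c hN hc ha.
case: (boolP [forall i : 'I_m, (i < k)%N ==> (a i < p)%N]) => hall.
  exists (c *: 'X_[a]); split.
  - exact: SVmon.
  - by apply: red_mon => i hi; move/forallP/(_ i): hall; rewrite hi.
  - by rewrite subrr; apply: I0.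
case/forallPn: hall => i; rewrite negb_imply -leqNgt => /andP [hi hpi].
set b := (a - U_(i) *+ p)%MM.
set a' := (b + U_(ord_max) *+ p)%MM.
have hab : a = (b + U_(i) *+ p)%MM.
  apply/mnmP => j; rewrite mnmDE mnmBE mulmnE mnm1E.
  by case: eqP => [<-|_]; rewrite ?mul1n ?subnK // mul0n subn0 addn0.
have ha'j j : j != i -> j != ord_max -> a' j = a j.
  move=> ji jm; rewrite mnmDE mnmBE !mulmnE !mnm1E.
  by rewrite eq_sym (negbTE ji) eq_sym (negbTE jm) !mul0n subn0 addn0.
have ha'i : a' i = (a i - p)%N.
  by rewrite mnmDE mnmBE !mulmnE !mnm1E eqxx eq_sym (negbTE (lt_neq_max hi)) mul1n mul0n addn0.
have hmsr : msr a = (msr a' + p)%N.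
  rewrite /msr (bigD1 i) //= [X in _ = (X + _)%N](bigD1 i) //= ha'i.
  rewrite -addnA [(_ + p)%N]addnC addnA subnK //; congr (_ + _)%N.
  apply: eq_bigr => j /andP [hj ji]; rewrite ha'j //; exact: lt_neq_max.
have [r [hr1 hr2 hr3]] : exists r, [/\ inAX p V r, red r & inI p V k (c *: 'X_[a'] - r)].
  apply: IH => //.
  - by rewrite -ltnS (leq_trans _ hN) // ltnS hmsr -{1}(addn0 (msr a')) ltn_add2l.
  - move=> j hj; have ji : j != i by apply: contraNneq hj => ->; apply: hV.
    have jm : j != ord_max by apply: contraNneq hj => ->.
    by rewrite ha'j //; apply: ha.
exists r; split=> //.
have -> : c *: 'X_[a] - r = (c *: 'X_[a] - c *: 'X_[a']) + (c *: 'X_[a'] - r).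
  by rewrite addrA subrK.
apply: ID => //.
have -> : c *: 'X_[a] - c *: 'X_[a'] = (c *: 'X_[b]) * Mgen p i.
  by rewrite Mgen_lt // mulrBr -!scalerAl {1}hab /a' !mpolyXD -!mpolyXn.
apply: Igen => //; apply: SVmon => // j hj.
by apply/eqP; rewrite -leqn0 mnmBE (leq_trans (leq_subr _ _)) // ha.
Qed.

Lemma reduce f : inAX p V f ->
  exists r, [/\ inAX p V r, red r & inI p V k (f - r)].
Proof.
move=> hf.
suff : forall s, {subset s <= msupp f} ->
  exists r, [/\ inAX p V r, red r & inI p V k (\sum_(a <- s) f@_a *: 'X_[a] - r)].
  by move=> H; rewrite {1}[f]mpolyE; apply: H.
elim=> [_|a s IH hs].
  by exists 0; split; [apply: SV0|apply: red0|rewrite big_nil subrr; apply: I0].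
have [r1 [h11 h12 h13]] : exists r, [/\ inAX p V r, red r & inI p V k (\sum_(a <- s) f@_a *: 'X_[a] - r)].
  by apply: IH => x hx; apply: hs; rewrite inE hx orbT.
have ha : a \in msupp f by apply: hs; rewrite mem_head.
have [r2 [h21 h22 h23]] := @reduce_mon (msr a).+1 a (f@_a) (ltnSn _) (SV_coef _ hf)
   (fun i hi => SV_supp hf ha hi).
exists (r2 + r1); split; [exact: SVD|exact: redD|].
rewrite big_cons opprD addrACA; exact: ID.
Qed.


Let hkm : (k <= m)%N := leqW hk.
Local Notation W j := (widen_ord hkm j).

Lemma cfc_W (chi : 'I_k -> CC) (j : 'I_k) : cfc chi (W j) = chi j.
Proof.
rewrite /cfc; case: insubP => [j' _ e|]; last by rewrite /= ltn_ord.
by congr chi; apply/val_inj; rewrite e.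
Qed.

Lemma cfc_nlt (chi : 'I_k -> CC) (i : 'I_m) : ~~ (i < k)%N -> cfc chi i = 1.
Proof. by move=> hi; rewrite /cfc; case: insubP => // j hj; rewrite hj in hi. Qed.

Lemma wc_eq (chi : 'I_k -> CC) a : wc chi a = \prod_(j < k) chi j ^+ a (W j).
Proof.
rewrite /wc (bigID (fun i : 'I_m => (i < k)%N)) /=.
rewrite [X in _ * X]big1 ?mulr1 => [|i hi]; last by rewrite cfc_nlt // expr1n.
rewrite (big_ord_narrow hkm); apply: eq_bigr => j _.
by rewrite cfc_W.
Qed.

Lemma col_inj (a a' : 'X_{1..m}) : (forall j : 'I_k, a (W j) = a' (W j)) ->
  col k a = col k a' -> a = a'.
Proof.
move=> hw hc; apply/mnmP => i.
case: (boolP (i < k)%N) => hi.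
  by have := hw (Ordinal hi); rewrite /=; congr (_ = _); congr (_ _); apply: val_inj.
case: (eqVneq i ord_max) => [->|him].
  have := congr1 (fun b : 'X_{1..m} => b ord_max) hc; rewrite /= !col_max //.
  have -> : (\sum_(j < m | (j < k)%N) a j = \sum_(j < m | (j < k)%N) a' j)%N.
    apply: eq_bigr => j hj; have := hw (Ordinal hj).
    by congr (_ = _); congr (_ _); apply: val_inj.
  by move/addIn.
have := congr1 (fun b : 'X_{1..m} => b i) hc; rewrite /= !col_other //.
Qed.

Lemma dvd_e (x y : nat) : (x < p)%N -> (y < p)%N ->
  (p %| (p - 1) * y + x)%N = (x == y).
Proof.
move=> hx hy; case: eqP => [->|nxy].
  by rewrite -{2}(mul1n y) -mulnDl (subnK p_gt0) dvdn_mulr.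
case: (boolP (p %| _)%N) => // hd; exfalso.
have e1 : ((p - 1) * y + x + y = p * y + x)%N.
  by rewrite -addnA [(x + y)%N]addnC addnA -{2}(mul1n y) -mulnDl (subnK p_gt0).
have := congr1 (fun z => z %% p)%N e1 => /=.
rewrite -(divnK hd) -modnDml modnMl add0n mulnC modnMDl !modn_small //.
by move=> e2; apply: nxy; rewrite e2.
Qed.

Lemma red_zero r : red r ->
  (forall chi : 'I_k -> CC, (forall j, chi j \in mu p) -> psi chi r = 0) -> r = 0.
Proof.
move=> hr hpsi; apply: msuppnil0; case E: (msupp r) => [//|a0 s].
have ha0 : a0 \in msupp r by rewrite E mem_head.
exfalso.
pose tau (t : {ffun 'I_k -> 'I_p}) := fun j => zeta p ^+ (t j).
have htau t j : tau t j \in mu p by apply/existsP; exists (t j).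
pose G (t : {ffun 'I_k -> 'I_p}) := \prod_(j < k) zeta p ^+ (t j * ((p - 1) * a0 (W j))).
pose e (a : 'X_{1..m}) (j : 'I_k) := ((p - 1) * a0 (W j) + a (W j))%N.
have H0 : \sum_t cK n (G t) * (psi (tau t) r)@_(col k a0) = 0.
  by rewrite big1 // => t _; rewrite hpsi // mcoeff0 mulr0.
have H1 : \sum_t cK n (G t) * (psi (tau t) r)@_(col k a0) =
   \sum_(a <- msupp r | col k a == col k a0)
      r@_a * cK n (\prod_(j < k) \sum_(l < p) zeta p ^+ (l * e a j)).
  under eq_bigr do rewrite psi_coef mulr_sumr.
  rewrite exchange_big /=; apply: eq_bigr => a _.
  rewrite (bigA_distr_bigA) /= cK_sum mulr_sumr; apply: eq_bigr => t _.
  rewrite mulrCA -cKM wc_eq /G -big_split /=; congr (_ * cK n _).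
  by apply: eq_bigr => j _; rewrite /tau -exprM -exprD /e mulnDr.
have H2 a : a \in msupp r -> col k a == col k a0 ->
   \prod_(j < k) \sum_(l < p) zeta p ^+ (l * e a j) = if a == a0 then p%:R ^+ k else 0.
  move=> ha hc; under eq_bigr do rewrite (orth p_gt0).
  have hlt (b : 'X_{1..m}) (j : 'I_k) : b \in msupp r -> (b (W j) < p)%N.
    by move=> hb; apply: hr => //=; exact: ltn_ord.
  case: eqP => [->|na].
    rewrite (eq_bigr (fun _ => p%:R)) => [|j _]; first by rewrite prodr_const card_ord.
    by rewrite /e dvd_e ?eqxx //; apply: hlt.
  have [j hj] : exists j : 'I_k, a (W j) != a0 (W j).
    case: (boolP [exists j : 'I_k, a (W j) != a0 (W j)]) => [/existsP //|].
    rewrite negb_exists => /forallP hall; exfalso.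
    by apply: na; apply: col_inj => [j|]; [apply/eqP; move: (hall j); rewrite negbK|apply/eqP].
  rewrite (bigD1 j) //= /e dvd_e ?(negbTE hj) ?mul0r //; exact: hlt.
have hp : cK n (p%:R ^+ k) != 0 by rewrite cK_eq0 expf_neq0 // pnatr_eq0 -lt0n.
move: H0; rewrite H1 big_mkcond (bigD1_seq a0) ?msupp_uniq //= eqxx.
rewrite H2 ?eqxx // big_seq_cond big1 ?addr0 => [|a /andP [ha na]].
  by move/eqP; rewrite mulf_eq0 (negbTE hp) orbF => /eqP h; move: ha0; rewrite mcoeff_msupp h eqxx.
case: ifP => // hc; rewrite H2 // (negbTE na) cK0 mulr0 //.
Qed.


Lemma ker f : inAX p V f ->
  (forall chi : 'I_k -> CC, (forall j, chi j \in mu p) -> psi chi f = 0) -> inI p V k f.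
Proof.
move=> hf hpsi.
have [r [hr1 hr2 hr3]] := reduce hf.
suff r0 : r = 0 by move: hr3; rewrite r0 subr0.
apply: (red_zero hr2) => chi hchi.
have h1 : psi chi (f - r) = 0 := psi_I hchi hr3.
rewrite psiB hpsi // sub0r in h1.
by rewrite -[psi chi r]opprK h1 oppr0.
Qed.

End K.

Section Final.
Variables (p n : nat).
Hypothesis p_gt0 : (0 < p)%N.
Local Notation m := n.+1.
Local Notation PXn := (PX n).


Lemma SV_Mm : inAX p predT (Mm p n).
Proof.
rewrite /Mm; apply: SVB; apply: SV_exp; first exact: SVX.
by apply: SV_sum => j _; apply: SVZ; [apply: inA_zK|apply: SVX].
Qed.

Lemma X_homog (i : 'I_m) : ('X_i : PXn) \is 1.-homog.
Proof. by rewrite dhomogX /= mdeg1. Qed.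

Lemma Mm_homog : Mm p n \is p.-homog.
Proof.
rewrite /Mm; apply: rpredB.
  by have := dhomogMn p (X_homog ord_max); rewrite mul1n.
have hs : (\sum_(j < m) zK j *: 'X_j : PXn) \is 1.-homog.
  by apply: rpred_sum => j _; apply: dhomogZ; apply: X_homog.
by have := dhomogMn p hs; rewrite mul1n.
Qed.

Lemma X_neq0 (i : 'I_m) e : ('X_i : PXn) ^+ e != 0.
Proof. by rewrite expf_neq0 // -msupp_eq0 msuppX. Qed.

Lemma psi_Mm (chi : 'I_n -> CC) : psi chi (Mm p n) != 0.
Proof.
pose W : PZ n := \sum_(j < m) 'X_j * (cfc chi j)%:MP.
have hsg (j : 'I_m) : sg n j = ord_max.
  by rewrite /sg; case: ifP => // hj; apply/val_inj => /=; apply/eqP; rewrite eqn_leq -ltnS ltn_ord leqNgt hj.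
have -> : psi chi (Mm p n) = (1 - W%:F ^+ p) *: 'X_ord_max ^+ p.
  rewrite /Mm psiB /psi !rmorphXn /= -!/(psi chi _) psiX cfc_max // sg_max cK1 scale1r.
  have -> : psi chi (\sum_(j < m) zK j *: 'X_j) = W%:F *: 'X_ord_max.
    rewrite /psi raddf_sum /= /W raddf_sum /= scaler_suml; apply: eq_bigr => j _.
    by rewrite linearZ /= -/(psi chi _) psiX hsg scalerA tofracM.
  by rewrite exprZn scalerBl scale1r.
rewrite scaler_eq0 negb_or X_neq0 andbT.
rewrite -tofracXn -tofrac1 -tofracB tofrac_eq0.
apply/eqP => /(congr1 (meval (fun _ => (0 : CC)))).
rewrite meval0 mevalB meval1 rmorphXn /= /W raddf_sum big1 ?expr0n ?subr0 /= => [|j _].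
  by rewrite gtn_eqF // subr0 => /eqP; rewrite oner_eq0.
by rewrite mevalM mevalXU mul0r.
Qed.

End Final.

Lemma psi_homog n k (chi : 'I_k -> CC) (f : PX n) d : (k <= n)%N ->
  f \is d.-homog -> psi chi f \is d.-homog.
Proof.
move=> hk hf; rewrite psiE big_seq; apply: rpred_sum => a ha.
by apply: dhomogZ; rewrite dhomogX /= mdeg_col (dhomog_mf hf).
Qed.

Lemma psi_SV p n k (chi : 'I_k -> CC) (f : PX n) : (k <= n)%N ->
  inAX p (Vk n k) f -> inAX p (Vk n 0) (psi chi f).
Proof.
move=> hk hf; rewrite psiE big_seq; apply: SV_sum => a ha.
apply: SVmon; first by apply: inAM; [apply: SV_coef hf|apply: inA_cK].
move=> i; rewrite inE /= => him.
case: (boolP (i < k)%N) => hi; first exact: col_lt.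
rewrite col_other //; apply: (SV_supp hf ha).
by rewrite inE negb_or hi him.
Qed.

Lemma Xdiff_neq0 n p (i j : 'I_n.+1) : (0 < p)%N -> i != j ->
  ('X_i ^+ p - 'X_j ^+ p : PX n) != 0.
Proof.
move=> p0 ij; apply/eqP => /(congr1 (meval (fun l => if l == i then (1 : KZ n) else 0))).
rewrite mevalB !rmorphXn /= !mevalXU eqxx eq_sym (negbTE ij) expr1n expr0n gtn_eqF // subr0 meval0.
by move/eqP; rewrite oner_eq0.
Qed.

Lemma meval_Mgen p n (i : 'I_n.+1) : (0 < p)%N -> meval (fun _ => (0 : KZ n)) (Mgen p i) = 0.
Proof.
move=> p0; rewrite /Mgen; case: eqP => _.
  rewrite /Mm mevalB !rmorphXn /= mevalXU raddf_sum /= big1 ?expr0n ?gtn_eqF ?subrr //.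
  by move=> j _; rewrite mevalZ mevalXU mulr0.
by rewrite mevalB !rmorphXn /= !mevalXU expr0n gtn_eqF // subrr.
Qed.
Unset Implicit Arguments.

Theorem mainTheorem10 (p n : nat) (p_gt0 : (0 < p)%nat) :
  (* (1) for 1 <= k <= m-1 (m = n.+1) *)
  (forall k : nat, (1 <= k)%nat -> (k <= n)%nat ->
     (* psi_k is well defined A_k -> (A_0)^{mu_p^k} *)
     (forall f : PX n, inAX p (Vk n k) f ->
        forall chi : 'I_k -> CC, (forall j, chi j \in mu p) ->
          inAX p (Vk n 0) (psi chi f)) /\
     (forall f : PX n, inAX p (Vk n k) f -> inI p (Vk n k) k f ->
        forall chi : 'I_k -> CC, (forall j, chi j \in mu p) -> psi chi f = 0) /\
     (* homogeneous *)
     (forall (f : PX n) (d : nat), inAX p (Vk n k) f -> f \is d.-homog ->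
        forall chi : 'I_k -> CC, (forall j, chi j \in mu p) ->
          psi chi f \is d.-homog) /\
     (* injective *)
     (forall f : PX n, inAX p (Vk n k) f ->
        (forall chi : 'I_k -> CC, (forall j, chi j \in mu p) -> psi chi f = 0) ->
        inI p (Vk n k) k f)) /\
  (* (2) multiplication by M_m on A_{m-1} *)
  ((forall f : PX n, inAX p predT f -> inAX p predT (Mm p n * f)) /\
   (forall f : PX n, inAX p predT f -> inI p predT n f -> inI p predT n (Mm p n * f)) /\
   (forall (f : PX n) (d : nat), inAX p predT f -> f \is d.-homog ->
       Mm p n * f \is (d + p)%nat.-homog) /\
   (forall (a : KZ n) (f g : PX n), inA p a -> inAX p predT f -> inAX p predT g ->
       Mm p n * (a *: f + g) = a *: (Mm p n * f) + Mm p n * g) /\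
   (forall f : PX n, inAX p predT f -> inI p predT n (Mm p n * f) -> inI p predT n f)) /\
  (* consequently M_1, ..., M_m is a regular sequence in A[xi_1, ..., xi_m] *)
  ((forall (k : 'I_n.+1) (f : PX n), inAX p predT f ->
       inI p predT k (Mgen p k * f) -> inI p predT k f) /\
   ~ inI p predT n.+1 (1 : PX n)).
Proof.
have reg_Mm : forall f : PX n, inAX p predT f -> inI p predT n (Mm p n * f) -> inI p predT n f.
  move=> f hf hI.
  have := @ker p n n p_gt0 (leqnn n) _ _ _ f hf.
  move=> K; apply: K.
  - move=> i _; exact: isT.
  - exact: isT.
  - move=> chi hchi.
  have h1 := @psi_I p n n p_gt0 (leqnn n) _ chi _ hchi hI.
  have h2 : psi chi (Mm p n) * psi chi f = 0 by rewrite -psiM.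
  move/eqP: h2; rewrite mulf_eq0; case/orP => h3.
    have h4 := psi_Mm p_gt0 chi.
    by case: (negP h4).
  exact/eqP.
split.
  move=> k k1 hk.
  have hV : forall i : 'I_n.+1, (i < k)%N -> i \in Vk n k.
    by move=> i hi; rewrite inE hi.
  have hVm : ord_max \in Vk n k by rewrite inE eqxx orbT.
  split; [|split; [|split]].
  - move=> f hf chi _; exact: psi_SV hk hf.
  - move=> f _ hI chi hchi; exact: (psi_I p_gt0 hk hchi hI).
  - move=> f d _ hf chi _; exact: psi_homog hk hf.
  - move=> f hf hpsi; exact: (ker p_gt0 hk hV hVm hf hpsi).
split.
  split; [|split; [|split; [|split]]].
  - move=> f hf; apply: SVM; [exact: SV_Mm|exact: hf].
  - move=> f hf hI; exact: IM (@SV_Mm p n) hI.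
  - move=> f d _ hf; rewrite addnC; exact: dhomogM (Mm_homog p n) hf.
  - by move=> a f g _ _ _; rewrite mulrDr scalerAr.
  - exact: reg_Mm.
split.
  move=> k f hf hI.
  case: (eqVneq k ord_max) => [ek|hkm].
    have e1 : nat_of_ord k = n by rewrite ek.
    have e2 : Mgen p k = Mm p n by rewrite ek /Mgen eqxx.
    move: hI; rewrite e1 e2 => hI; exact: reg_Mm f hf hI.
  have hk' : (k <= n)%N by rewrite -ltnS ltn_ord.
  have := @ker p n k p_gt0 hk' _ _ _ f hf.
  move=> K; apply: K.
  - move=> i _; exact: isT.
  - exact: isT.
  - move=> chi hchi.
  have h1 := @psi_I p n k p_gt0 hk' _ chi _ hchi hI.
  have h2 : psi chi (Mgen p k) * psi chi f = 0 by rewrite -psiM.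
  move/eqP: h2; rewrite mulf_eq0; case/orP => h3; last exact/eqP.
  have hkk : ~~ (nat_of_ord k < k)%N by rewrite ltnn.
  have h4 : psi chi (Mgen p k) = 'X_k ^+ p - 'X_ord_max ^+ p.
    rewrite /Mgen (negbTE hkm) psiB /psi !rmorphXn /= -!/(psi chi _) !psiX.
    rewrite (cfc_max hk' chi) (sg_max n k) (cfc_nlt chi hkk) cK1 !scale1r /sg.
    by rewrite (negbTE hkk).
  have h5 := Xdiff_neq0 p_gt0 hkm.
  rewrite h4 in h3.
  by case: (negP h5).
move=> [g [_ h]].
have := congr1 (meval (fun _ => (0 : KZ n))) h.
rewrite meval1 raddf_sum /= big1 => [/eqP|i _].
  by rewrite oner_eq0.
by rewrite mevalM meval_Mgen // mulr0.
Qed.
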